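(* Let $c\in\mathsf{ACirc}[n,m]$ and let $\hat c\in\mathsf{Circ}[n+1,m]$ be obtained as follows: replace $c$ by an equivalent circuit containing exactly one occurrence of $\mathbf 1$ and no occurrence of $\mathbf 1^{op}$, remove this $\mathbf 1$ and replace it by an identity wire extended to the left boundary, creating a new left port. Then $c$ is realisable if and only if this new left port of $\hat c$ (the one to which $\mathbf 1$ was connected) is an input port of $\hat c$.
   Context: Fix a field $k$. Circuits: terms built from generators with sorts $(n,m)$: copier $\Delta:(1,2)$, discard $!:(1,0)$, amplifier $\mathsf{s}_r:(1,1)$ ($r\in k$), register $\mathsf{x}:(1,1)$, adder $+:(2,1)$, zero $0:(0,1)$, one $\mathbf{1}:(0,1)$; mirror images $\Delta^{op}:(2,1)$, $!^{op}:(0,1)$, $\mathsf{s}_r^{op}$, $\mathsf{x}^{op}:(1,1)$, $+^{op}:(1,2)$, $0^{op}:(1,0)$, $\mathbf{1}^{op}:(1,0)$; $\mathrm{id}_0,\mathrm{id}_1,\mathrm{sw}:(2,2)$; closed under $;$ and $\oplus$. $\mathsf{ACirc}$ is the resulting prop; $\mathsf{Circ}$ the sub-prop of circuits without $\mathbf 1,\mathbf 1^{op}$. Denotation over the field $k(x)$ of polynomial fractions: $[\![\Delta]\!]=\{(p,(p,p))\}$, $[\![!]\!]=\{(p,\bullet)\}$, $[\![+]\!]=\{((p,q),p+q)\}$, $[\![0]\!]=\{(\bullet,0)\}$, $[\![\mathbf 1]\!]=\{(\bullet,1)\}$, $[\![\mathsf s_r]\!]=\{(p,rp)\}$, $[\![\mathsf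 x]\!]=\{(p,px)\}$; mirrored generators denote converse relations; structural ones identity, swap, $\{(\bullet,\bullet)\}$; $;$ relational composition, $\oplus$ product. Circuits are equivalent if they have the same denotation (equivalently, equal in the complete theory AIH). Feedback: for $c:(n+1,m+1)$, $\mathrm{Tr}(c):(n,m)$ connects the last right port of $c$ to its last left port through a register $\mathsf x$, bending with cup $\eta=!^{op};\Delta:(0,2)$ and cap $\epsilon=\Delta^{op};!:(2,0)$. $\mathsf{SF}$ (signal flow graphs) is the closure of $\{\Delta,!,\mathsf s_r,\mathsf x,+,0,\mathrm{id}_0,\mathrm{id}_1,\mathrm{sw}\}$ under $;$, $\oplus$, $\mathrm{Tr}$; $\mathsf{ASF}$ (affine signal flow graphs) is the same closure with $\mathbf 1$ added. Rewiring: for $c:(n,m)$ and a partition of its ports into inputs $I$ and outputs $O$, the rewiring is the circuit of sort $(|I|,|O|)$ obtained by bending left ports in $O$ to the right with cups and right ports in $I$ to the left with caps. A port of a circuit $d\in\mathsf{Circ}$ is an input port if there is a partition with that port in $I$ whose rewiring is equivalent to a circuit of $\mathsf{SF}$. A circuit $c\in\mathsf{ACirc}$ is realisable if for some partition its rewiring is equivalent to a circuit of $\mathsf{ASF}$. *)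

(* Defs.v *)
From HB Require Import structures.
From mathcomp Require Import all_boot all_order all_algebra.
From mathcomp Require Import fraction.
Set Implicit Arguments. Unset Strict Implicit. Unset Printing Implicit Defensive.
Import GRing.Theory.
Local Open Scope ring_scope.

Section Circuits.
Variable k : fieldType.

Inductive gen : nat -> nat -> Type :=
| GCopy : gen 1 2
| GDisc : gen 1 0
| GAmp : k -> gen 1 1
| GReg : gen 1 1
| GAdd : gen 2 1
| GZero : gen 0 1
| GOne : gen 0 1.

Inductive circ : nat -> nat -> Type :=
| CGen n m : gen n m -> circ n m
| COp n m : gen n m -> circ m n
| CId0 : circ 0 0
| CId1 : circ 1 1
| CSw : circ 2 2
| CSeq n l m : circ n l -> circ l m -> circ n m
| CTens n1 m1 n2 m2 : circ n1 m1 -> circ n2 m2 -> circ (n1 + n2) (m1 + m2).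

Definition K := {fraction {poly k}}.
Definition kx (p : {poly k}) : K := FracField.tofrac p.
Definition xK : K := kx 'X.

Definition o0 : 'I_2 := ord0.
Definition o1 : 'I_2 := ord_max.

Definition sem_gen n m (g : gen n m) : 'rV[K]_n -> 'rV[K]_m -> Prop :=
  match g in gen n m return 'rV[K]_n -> 'rV[K]_m -> Prop with
  | GCopy => fun u v => v ord0 o0 = u ord0 ord0 /\ v ord0 o1 = u ord0 ord0
  | GDisc => fun _ _ => True
  | GAmp r => fun u v => v ord0 ord0 = kx r%:P * u ord0 ord0
  | GReg => fun u v => v ord0 ord0 = u ord0 ord0 * xK
  | GAdd => fun u v => v ord0 ord0 = u ord0 o0 + u ord0 o1
  | GZero => fun _ v => v ord0 ord0 = 0
  | GOne => fun _ v => v ord0 ord0 = 1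
  end.

Fixpoint sem n m (c : circ n m) : 'rV[K]_n -> 'rV[K]_m -> Prop :=
  match c in circ n m return 'rV[K]_n -> 'rV[K]_m -> Prop with
  | CGen _ _ g => sem_gen g
  | COp _ _ g => fun u v => sem_gen g v u
  | CId0 => fun _ _ => True
  | CId1 => fun u v => u = v
  | CSw => fun u v => v ord0 o0 = u ord0 o1 /\ v ord0 o1 = u ord0 o0
  | CSeq _ _ _ c1 c2 => fun u v => exists w, sem c1 u w /\ sem c2 w v
  | CTens _ _ _ _ c1 c2 => fun u v =>
      sem c1 (lsubmx u) (lsubmx v) /\ sem c2 (rsubmx u) (rsubmx v)
  end.

Definition circ_equiv n m (c d : circ n m) : Prop :=
  forall u v, sem c u v <-> sem d u v.

Definition is_one n m (g : gen n m) : bool :=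
  match g with GOne => true | _ => false end.

Fixpoint uses_one n m (c : circ n m) : bool :=
  match c with
  | CGen _ _ g => is_one g
  | COp _ _ g => is_one g
  | CSeq _ _ _ c1 c2 => uses_one c1 || uses_one c2
  | CTens _ _ _ _ c1 c2 => uses_one c1 || uses_one c2
  | _ => false
  end.

Definition is_Circ n m (c : circ n m) : Prop := uses_one c = false.

Definition castc n m n' m' (e1 : n = n') (e2 : m = m') (c : circ n m) : circ n' m' :=
  match e1 in _ = n1 return circ n1 m' with
  | erefl => match e2 in _ = m1 return circ n m1 with erefl => c end
  end.

Fixpoint idn n : circ n n :=
  match n return circ n n with
  | 0 => CId0
  | n'.+1 => CTens CId1 (idn n')
  end.

Definition eta : circ 0 2 := CSeq (COp GDisc) (CGen GCopy).
Definition eps : circ 2 0 := CSeq (COp GCopy) (CGen GDisc).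

(** Feedback Tr: connect the last right port of c to its last left port
    through a register x, bending with eta and eps. *)
Definition Tr n m (c : circ (n + 1) (m + 1)) : circ n m :=
  let A : circ n (n + 2) := castc (addn0 n) erefl (CTens (idn n) eta) in
  let B : circ (n + 2) (m + 2) :=
      castc (esym (addnA n 1 1)) (esym (addnA m 1 1)) (CTens c CId1) in
  let C : circ (m + 2) (m + 2) := CTens (idn m) (CTens (CGen GReg) CId1) in
  let D : circ (m + 2) m := castc erefl (addn0 m) (CTens (idn m) eps) in
  CSeq A (CSeq B (CSeq C D)).

Inductive SFgen (aff : bool) : forall n m, circ n m -> Prop :=
| sf_copy : SFgen aff (CGen GCopy)
| sf_disc : SFgen aff (CGen GDisc)
| sf_amp r : SFgen aff (CGen (GAmp r))
| sf_reg : SFgen aff (CGen GReg)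
| sf_add : SFgen aff (CGen GAdd)
| sf_zero : SFgen aff (CGen GZero)
| sf_one : aff = true -> SFgen aff (CGen GOne)
| sf_id0 : SFgen aff CId0
| sf_id1 : SFgen aff CId1
| sf_sw : SFgen aff CSw
| sf_seq n l m (c1 : circ n l) (c2 : circ l m) :
    SFgen aff c1 -> SFgen aff c2 -> SFgen aff (CSeq c1 c2)
| sf_tens n1 m1 n2 m2 (c1 : circ n1 m1) (c2 : circ n2 m2) :
    SFgen aff c1 -> SFgen aff c2 -> SFgen aff (CTens c1 c2)
| sf_tr n m (c : circ (n + 1) (m + 1)) : SFgen aff c -> SFgen aff (Tr c).

Definition SF n m (c : circ n m) : Prop := SFgen false c.
Definition ASF n m (c : circ n m) : Prop := SFgen true c.

(** A partition of the ports of c : circ n m into inputs and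
    outputs is given by P : {set 'I_n} (left ports that are inputs) and
    Q : {set 'I_m} (right ports that are inputs).  The rewiring has sort
    (#|P| + #|Q|, #|~:P| + #|~:Q|); its left ports are the input left ports
    (in order) followed by the input right ports, its right ports are the
    output left ports followed by the output right ports.  Since cups and
    caps denote equality of their two ends, the rewiring denotes the
    relation below; [@rewiring_equiv n m c P Q d] says that the rewiring of c
    along (P,Q) is equivalent to d. *)
Definition sel n (P : {set 'I_n}) (u : 'rV[K]_n) : 'rV[K]_#|P| :=
  \row_(i < #|P|) u ord0 (enum_val i).

Definition rewiring_equiv n m (c : circ n m) (P : {set 'I_n}) (Q : {set 'I_m})
    (d : circ (#|P| + #|Q|) (#|~: P| + #|~: Q|)) : Prop :=
  forall a b, sem d a b <->
    exists u v, sem c u v /\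
      a = row_mx (sel P u) (sel Q v) /\ b = row_mx (sel (~: P) u) (sel (~: Q) v).

(** Ports: inl i = i-th left port, inr j = j-th right port. *)
Definition in_inputs n m (P : {set 'I_n}) (Q : {set 'I_m}) (p : 'I_n + 'I_m) : bool :=
  match p with inl i => i \in P | inr j => j \in Q end.

Definition is_input_port n m (c : circ n m) (p : 'I_n + 'I_m) : Prop :=
  exists (P : {set 'I_n}) (Q : {set 'I_m}), in_inputs P Q p /\
    exists d : circ (#|P| + #|Q|) (#|~: P| + #|~: Q|), SF d /\ @rewiring_equiv n m c P Q d.

Definition realisable n m (c : circ n m) : Prop :=
  exists (P : {set 'I_n}) (Q : {set 'I_m})
         (d : circ (#|P| + #|Q|) (#|~: P| + #|~: Q|)), ASF d /\ @rewiring_equiv n m c P Q d.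

Definition plug_one n m (chat : circ n.+1 m) : circ n m :=
  CSeq (CTens (CGen GOne) (idn n)) chat.

End Circuits.

(* Main.v *)
From HB Require Import structures.
From mathcomp Require Import all_boot all_order all_algebra fraction ring.
Require Import Defs.
From Corelib Require Import Setoid.
Set Implicit Arguments. Unset Strict Implicit. Unset Printing Implicit Defensive.
Import GRing.Theory.
Local Open Scope ring_scope.


Section S.
Variable k : fieldType.
Local Notation K := (K k).
Local Notation circ := (circ k).

Definition semA_gen (t : K) n m (g : gen k n m) : 'rV[K]_n -> 'rV[K]_m -> Prop :=
  match g in gen _ n m return 'rV[K]_n -> 'rV[K]_m -> Prop with
  | GCopy => fun u v => v ord0 o0 = u ord0 ord0 /\ v ord0 o1 = u ord0 ord0
  | GDisc => fun _ _ => True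
  | GAmp r => fun u v => v ord0 ord0 = kx r%:P * u ord0 ord0
  | GReg => fun u v => v ord0 ord0 = u ord0 ord0 * xK k
  | GAdd => fun u v => v ord0 ord0 = u ord0 o0 + u ord0 o1
  | GZero => fun _ v => v ord0 ord0 = 0
  | GOne => fun _ v => v ord0 ord0 = t
  end.

Fixpoint semA (t : K) n m (c : circ n m) : 'rV[K]_n -> 'rV[K]_m -> Prop :=
  match c in Defs.circ _ n m return 'rV[K]_n -> 'rV[K]_m -> Prop with
  | CGen _ _ g => semA_gen t g
  | COp _ _ g => fun u v => semA_gen t g v u
  | CId0 => fun _ _ => True
  | CId1 => fun u v => u = v
  | CSw => fun u v => v ord0 o0 = u ord0 o1 /\ v ord0 o1 = u ord0 o0
  | CSeq _ _ _ c1 c2 => fun u v => exists w, semA t c1 u w /\ semA t c2 w v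
  | CTens _ _ _ _ c1 c2 => fun u v =>
      semA t c1 (lsubmx u) (lsubmx v) /\ semA t c2 (rsubmx u) (rsubmx v)
  end.

Lemma sem_semA n m (c : circ n m) u v : sem c u v <-> semA 1 c u v.
Proof.
elim: c u v => [n' m' g u v|n' m' g u v|u v|u v|u v|n' l m' c1 IH1 c2 IH2 u v
  |n1 m1 n2 m2 c1 IH1 c2 IH2 u v] /=.
1,2: by case: n' m' / g u v => *; split.
1-3: by [].
- by split=> -[w [H1 H2]]; exists w; split; [apply/IH1|apply/IH2|apply/IH1|apply/IH2].
- by split=> -[H1 H2]; split; [apply/IH1|apply/IH2|apply/IH1|apply/IH2].
Qed.

Lemma semA_noone n m (c : circ n m) t t' u v :
  uses_one c = false -> semA t c u v <-> semA t' c u v.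
Proof.
elim: c u v => [n' m' g u v|n' m' g u v|u v|u v|u v|n' l m' c1 IH1 c2 IH2 u v
  |n1 m1 n2 m2 c1 IH1 c2 IH2 u v] /=.
1,2: by case: n' m' / g u v => *; split.
1-3: by [].
- move=> /norP [/negbTE h1 /negbTE h2].
  by split=> -[w [H1 H2]]; exists w; split;
    [apply/(IH1 _ _ h1)|apply/(IH2 _ _ h2)|apply/(IH1 _ _ h1)|apply/(IH2 _ _ h2)].
- move=> /norP [/negbTE h1 /negbTE h2].
  by split=> -[H1 H2]; split;
    [apply/(IH1 _ _ h1)|apply/(IH2 _ _ h2)|apply/(IH1 _ _ h1)|apply/(IH2 _ _ h2)].
Qed.

Definition tolist n (r : 'rV[K]_n) : seq K := [seq r ord0 i | i <- enum 'I_n].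

Lemma size_tolist n (r : 'rV[K]_n) : size (tolist r) = n.
Proof. by rewrite size_map size_enum_ord. Qed.

Lemma nth_tolist n (r : 'rV[K]_n) i (hi : (i < n)%N) :
  nth 0 (tolist r) i = r ord0 (Ordinal hi).
Proof.
rewrite (nth_map (Ordinal hi)) ?size_enum_ord //; congr (r _ _).
by apply: val_inj; rewrite /= nth_enum_ord.
Qed.

Lemma tolist_inj n (r r' : 'rV[K]_n) : tolist r = tolist r' -> r = r'.
Proof.
move=> h; apply/rowP => i.
have := nth_tolist r (ltn_ord i); rewrite h nth_tolist.
by have -> : Ordinal (ltn_ord i) = i by apply: val_inj.
Qed.

Definition ofl n (l : seq K) : 'rV[K]_n := \row_(i < n) nth 0 l i.

Lemma tolist_ofl n (l : seq K) : size l = n -> tolist (ofl n l) = l.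
Proof.
move=> hs; apply: (@eq_from_nth _ 0); first by rewrite size_tolist.
by move=> i; rewrite size_tolist => hi; rewrite nth_tolist mxE.
Qed.

Lemma tolist_surj n (l : seq K) : size l = n -> exists r : 'rV[K]_n, tolist r = l.
Proof. by move=> hs; exists (ofl n l); apply: tolist_ofl. Qed.

Lemma tolist_row_mx n1 n2 (a : 'rV[K]_n1) (b : 'rV[K]_n2) :
  tolist (row_mx a b) = tolist a ++ tolist b.
Proof.
apply: (@eq_from_nth _ 0); first by rewrite size_cat !size_tolist.
move=> i; rewrite size_tolist => hi; rewrite nth_tolist nth_cat size_tolist.
case: ifP => h.
  rewrite nth_tolist.
  have -> : Ordinal hi = lshift n2 (Ordinal h) by apply: val_inj.
  by rewrite row_mxEl.
have h2 : (i - n1 < n2)%N by rewrite ltn_subLR // leqNgt h.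
rewrite nth_tolist.
have -> : Ordinal hi = rshift n1 (Ordinal h2).
  by apply: val_inj => /=; rewrite subnKC // leqNgt h.
by rewrite row_mxEr.
Qed.

Lemma tolist_lsub n1 n2 (w : 'rV[K]_(n1 + n2)) : tolist (lsubmx w) = take n1 (tolist w).
Proof. by rewrite -{2}(hsubmxK w) tolist_row_mx take_size_cat // size_tolist. Qed.

Lemma tolist_rsub n1 n2 (w : 'rV[K]_(n1 + n2)) : tolist (rsubmx w) = drop n1 (tolist w).
Proof. by rewrite -{2}(hsubmxK w) tolist_row_mx drop_size_cat // size_tolist. Qed.

Lemma tolist0 (r : 'rV[K]_0) : tolist r = [::].
Proof. by apply: size0nil; rewrite size_tolist. Qed.

Lemma tolist1 (r : 'rV[K]_1) : tolist r = [:: r ord0 ord0].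
Proof.
apply: (@eq_from_nth _ 0); first by rewrite size_tolist.
move=> i; rewrite size_tolist; case: i => // h.
by rewrite nth_tolist /=; congr (r _ _); apply: val_inj.
Qed.

Lemma tolist2 (r : 'rV[K]_2) : tolist r = [:: r ord0 o0; r ord0 o1].
Proof.
apply: (@eq_from_nth _ 0); first by rewrite size_tolist.
move=> i; rewrite size_tolist; case: i => [|[|//]] h;
  by rewrite nth_tolist /=; congr (r _ _); apply: val_inj.
Qed.

End S.


Section S2.
Variable k : fieldType.
Local Notation K := (K k).
Local Notation circ := (circ k).

Definition semLA (t : K) n m (c : circ n m) (l1 l2 : seq K) :=
  exists u v, semA t c u v /\ tolist u = l1 /\ tolist v = l2.

Lemma semLA_size t n m (c : circ n m) l1 l2 :
  semLA t c l1 l2 -> size l1 = n /\ size l2 = m.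
Proof. by move=> [u [v [_ [<- <-]]]]; rewrite !size_tolist. Qed.

Lemma semLA_row t n m (c : circ n m) u v :
  semA t c u v <-> semLA t c (tolist u) (tolist v).
Proof.
split; first by move=> h; exists u, v.
by move=> [u' [v' [h [/tolist_inj e1 /tolist_inj e2]]]]; rewrite -e1 -e2.
Qed.

Lemma semLA_seq t n l m (c1 : circ n l) (c2 : circ l m) l1 l2 :
  semLA t (CSeq c1 c2) l1 l2 <-> exists l0, semLA t c1 l1 l0 /\ semLA t c2 l0 l2.
Proof.
split.
  move=> [u [v [[w [h1 h2]] [<- <-]]]].
  by exists (tolist w); split; [exists u, w | exists w, v].
move=> [l0 [[u [w [h1 [<- e]]]] [w' [v [h2 [e' <-]]]]]].
have ew : w = w' by apply: tolist_inj; rewrite e e'.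
by move: h1; rewrite ew => h1; exists u, v; split=> //; exists w'.
Qed.

Lemma semLA_tens t n1 m1 n2 m2 (c1 : circ n1 m1) (c2 : circ n2 m2) l1 l2 :
  semLA t (CTens c1 c2) l1 l2 <->
  exists a b c d, l1 = a ++ b /\ l2 = c ++ d /\ semLA t c1 a c /\ semLA t c2 b d.
Proof.
split.
  move=> [u [v [[h1 h2] [<- <-]]]].
  exists (tolist (lsubmx u)), (tolist (rsubmx u)), (tolist (lsubmx v)), (tolist (rsubmx v)).
  rewrite -!tolist_row_mx !hsubmxK; do 2 split => //.
  by split; [exists (lsubmx u), (lsubmx v) | exists (rsubmx u), (rsubmx v)].
move=> [a [b [c [d [-> [-> [[u1 [v1 [h1 [<- <-]]]] [u2 [v2 [h2 [<- <-]]]]]]]]]]].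
exists (row_mx u1 u2), (row_mx v1 v2); rewrite !tolist_row_mx; split=> //=.
by rewrite !row_mxKl !row_mxKr.
Qed.

Lemma semLA_cast t n m n' m' (e1 : n = n') (e2 : m = m') (c : circ n m) l1 l2 :
  semLA t (castc e1 e2 c) l1 l2 <-> semLA t c l1 l2.
Proof. by case: n' / e1; case: m' / e2. Qed.

Lemma semLA_id1 t l1 l2 :
  semLA t (CId1 k) l1 l2 <-> exists x, l1 = [:: x] /\ l2 = [:: x].
Proof.
split.
  by move=> [u [v [/= -> [<- <-]]]]; exists (v ord0 ord0); rewrite tolist1.
move=> [x [-> ->]]; exists (ofl 1 [:: x]), (ofl 1 [:: x]).
by rewrite tolist_ofl.
Qed.

Lemma semLA_idn t n l1 l2 : semLA t (idn k n) l1 l2 <-> l1 = l2 /\ size l1 = n.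
Proof.
elim: n l1 l2 => [|n IH] l1 l2.
  split; first by move=> [u [v [_ [<- <-]]]]; rewrite !tolist0.
  by move=> [<- /size0nil ->]; exists (ofl 0 [::]), (ofl 0 [::]); rewrite tolist0.
apply: iff_trans (semLA_tens t (CId1 k) (idn k n) l1 l2) _; split.
  move=> [a [b [c [d [-> [-> [/semLA_id1 [x [-> ->]] /IH [-> <-]]]]]]]].
  by [].
move=> [<-]; case: l1 => // x l1 [hs].
exists [:: x], l1, [:: x], l1; do 2 split => //; split.
  by apply/semLA_id1; exists x.
by apply/IH.
Qed.

Lemma semLA_disc t l1 l2 :
  semLA t (CGen (GDisc k)) l1 l2 <-> (exists x, l1 = [:: x]) /\ l2 = [::].
Proof.
split.
  by move=> [u [v [_ [<- <-]]]]; rewrite tolist1 tolist0; split=> //; eexists.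
move=> [[x ->] ->]; exists (ofl 1 [:: x]), (ofl 0 [::]).
by rewrite !tolist_ofl.
Qed.

Lemma semLA_discop t l1 l2 :
  semLA t (COp (GDisc k)) l1 l2 <-> l1 = [::] /\ (exists x, l2 = [:: x]).
Proof.
split.
  by move=> [u [v [_ [<- <-]]]]; rewrite tolist1 tolist0; split=> //; eexists.
move=> [-> [x ->]]; exists (ofl 0 [::]), (ofl 1 [:: x]).
by rewrite !tolist_ofl.
Qed.

Lemma semLA_copy t l1 l2 :
  semLA t (CGen (GCopy k)) l1 l2 <-> exists x, l1 = [:: x] /\ l2 = [:: x; x].
Proof.
split.
  move=> [u [v [/= [h1 h2] [<- <-]]]]; rewrite tolist1 tolist2 h1 h2.
  by eexists.
move=> [x [-> ->]]; exists (ofl 1 [:: x]), (ofl 2 [:: x; x]).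
by rewrite !tolist_ofl //= !mxE.
Qed.

Lemma semLA_copyop t l1 l2 :
  semLA t (COp (GCopy k)) l1 l2 <-> exists x, l1 = [:: x; x] /\ l2 = [:: x].
Proof.
split.
  move=> [u [v [/= [h1 h2] [<- <-]]]]; rewrite tolist1 tolist2 h1 h2.
  by eexists.
move=> [x [-> ->]]; exists (ofl 2 [:: x; x]), (ofl 1 [:: x]).
by rewrite !tolist_ofl //= !mxE.
Qed.

Lemma semLA_reg t l1 l2 :
  semLA t (CGen (GReg k)) l1 l2 <-> exists x, l1 = [:: x] /\ l2 = [:: x * xK k].
Proof.
split.
  move=> [u [v [/= h1 [<- <-]]]]; rewrite !tolist1 h1.
  by eexists.
move=> [x [-> ->]]; exists (ofl 1 [:: x]), (ofl 1 [:: x * xK k]).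
by rewrite !tolist_ofl //= !mxE.
Qed.

Lemma semLA_one t l1 l2 :
  semLA t (CGen (GOne k)) l1 l2 <-> l1 = [::] /\ l2 = [:: t].
Proof.
split.
  by move=> [u [v [/= h1 [<- <-]]]]; rewrite tolist0 tolist1 h1.
move=> [-> ->]; exists (ofl 0 [::]), (ofl 1 [:: t]).
by rewrite !tolist_ofl //= !mxE.
Qed.

Lemma semLA_sw t l1 l2 :
  semLA t (CSw k) l1 l2 <-> exists x y, l1 = [:: x; y] /\ l2 = [:: y; x].
Proof.
split.
  move=> [u [v [/= [h1 h2] [<- <-]]]]; rewrite !tolist2 h1 h2.
  by do 2 eexists.
move=> [x [y [-> ->]]]; exists (ofl 2 [:: x; y]), (ofl 2 [:: y; x]).
by rewrite !tolist_ofl //= !mxE.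
Qed.

End S2.


Section S3.
Variable k : fieldType.
Local Notation K := (K k).
Local Notation circ := (circ k).

Lemma semLA_noone t t' n m (c : circ n m) l1 l2 :
  uses_one c = false -> semLA t c l1 l2 <-> semLA t' c l1 l2.
Proof.
move=> h; split=> -[u [v [H [e1 e2]]]]; exists u, v; split=> //.
  by apply/(semA_noone t t' u v h).
by apply/(semA_noone t' t u v h).
Qed.

Lemma rcons2 (l : seq K) y z : l ++ [:: y; z] = rcons (rcons l y) z.
Proof. by rewrite -!cats1 -catA. Qed.

Lemma cat_eqsize (a b c d : seq K) : size a = size c -> a ++ b = c ++ d -> a = c /\ b = d.
Proof. by move=> hs /eqP; rewrite eqseq_cat // => /andP [/eqP -> /eqP ->]. Qed.

Lemma semLA_eta t l1 l2 : semLA t (eta k) l1 l2 <-> l1 = [::] /\ exists y, l2 = [:: y; y].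
Proof.
rewrite /eta semLA_seq; split.
  move=> [l0 [/semLA_discop [-> [x ->]] /semLA_copy [y [_ ->]]]].
  by split=> //; exists y.
move=> [-> [y ->]]; exists [:: y]; split.
  by apply/semLA_discop; split=> //; exists y.
by apply/semLA_copy; exists y.
Qed.

Lemma semLA_eps t l1 l2 : semLA t (eps k) l1 l2 <-> l2 = [::] /\ exists y, l1 = [:: y; y].
Proof.
rewrite /eps semLA_seq; split.
  move=> [l0 [/semLA_copyop [x [-> ->]] /semLA_disc [_ ->]]].
  by split=> //; exists x.
move=> [-> [y ->]]; exists [:: y]; split.
  by apply/semLA_copyop; exists y.
by apply/semLA_disc; split=> //; exists y.
Qed.

Lemma semLA_Tr t n m (c : circ (n + 1) (m + 1)) l1 l2 :
  semLA t (Tr c) l1 l2 <->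
  exists y z, semLA t c (rcons l1 y) (rcons l2 z) /\ y = z * xK k.
Proof.
rewrite /Tr semLA_seq; split.
  move=> [la [HA /semLA_seq [lb [HB /semLA_seq [lc [HC HD]]]]]].
  move: HA; rewrite semLA_cast semLA_tens.
  move=> [a1 [b1 [c1 [d1 [e1 [e2 [/semLA_idn [ea sa] /semLA_eta [eb [y ed]]]]]]]]].
  subst l1 la a1 b1 d1; rewrite cats0.
  move: HB; rewrite semLA_cast semLA_tens.
  move=> [a2 [b2 [c2 [d2 [e1 [e2 [H2 /semLA_id1 [y' [eb ed]]]]]]]]].
  subst lb b2 d2.
  move: e1; rewrite rcons2 cats1 => /rcons_inj [ea ey]; subst a2 y'.
  have [_ sc2] := semLA_size H2.
  case/lastP: c2 sc2 H2 HC => [|c2 z] sc2 H2 HC.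
    by exfalso; move: sc2; rewrite addn1.
  have {}sc2 : size c2 = m by move: sc2; rewrite size_rcons addn1 => -[].
  move: HC; rewrite semLA_tens => -[a3 [b3 [c3 [d3 [e1 [e2 [/semLA_idn [ea3 sa3] H3]]]]]]].
  have := iffLR (semLA_tens t (CGen (GReg k)) (CId1 k) b3 d3) H3.
  move=> [a4 [b4 [c4 [d4 [e3 [e4 [/semLA_reg [x [ea4 ec4]] /semLA_id1 [x' [eb4 ed4]]]]]]]]].
  subst b3 d3 a4 b4 c4 d4 lc a3.
  rewrite -cats1 -catA /= in e1.
  have /cat_eqsize : size c2 = size c3 by rewrite sc2 sa3.
  move=> /(_ _ _ e1) [ec [ez ey]]; subst c3 x x'.
  move: HD; rewrite semLA_cast semLA_tens.
  move=> [a5 [b5 [c5 [d5 [e1' [e2' [/semLA_idn [ea5 sa5] /semLA_eps [ed5 [y5 eb5]]]]]]]]].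
  subst a5 b5 d5 l2; rewrite cats0.
  have /cat_eqsize : size c2 = size c5 by rewrite sc2 sa5.
  move=> /(_ _ _ e1') [ec [ez ey]]; subst c5 y5.
  by exists y, z; split.
move=> [y [z [H ey]]]; subst y.
exists (rcons (rcons l1 (z * xK k)) (z * xK k)); split.
  have sl1 : size l1 = n.
    by have [+ _] := semLA_size H; rewrite size_rcons addn1 => -[].
  rewrite semLA_cast semLA_tens; exists l1, [::], l1, [:: z * xK k; z * xK k].
  rewrite cats0 rcons2; do 2 split => //; split; first by apply/semLA_idn.
  by apply/semLA_eta; split => //; exists (z * xK k).
have sl2 : size l2 = m.
  by have [_ +] := semLA_size H; rewrite size_rcons addn1 => -[].
apply/semLA_seq; exists (rcons (rcons l2 z) (z * xK k)); split.
  rewrite semLA_cast semLA_tens.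
  exists (rcons l1 (z * xK k)), [:: z * xK k], (rcons l2 z), [:: z * xK k].
  rewrite !cats1; do 2 split => //; split => //.
  by apply/semLA_id1; exists (z * xK k).
apply/semLA_seq; exists (rcons (rcons l2 (z * xK k)) (z * xK k)); split.
  rewrite semLA_tens; exists l2, [:: z; z * xK k], l2, [:: z * xK k; z * xK k].
  rewrite !rcons2; do 2 split => //; split; first by apply/semLA_idn.
  apply: (iffRL (semLA_tens t (CGen (GReg k)) (CId1 k) _ _)).
  exists [:: z], [:: z * xK k], [:: z * xK k], [:: z * xK k].
  do 2 split => //; split; first by apply/semLA_reg; exists z.
  by apply/semLA_id1; exists (z * xK k).
rewrite semLA_cast semLA_tens; exists l2, [:: z * xK k; z * xK k], l2, [::].
rewrite cats0 rcons2; do 2 split => //; split; first by apply/semLA_idn.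
by apply/semLA_eps; split => //; exists (z * xK k).
Qed.

End S3.


Section S4.
Variable k : fieldType.
Local Notation K := (K k).
Local Notation circ := (circ k).

Lemma semLA_plug t N M (d : circ (1 + N) M) l1 l2 :
  semLA t (CSeq (CTens (CGen (GOne k)) (idn k N)) d) l1 l2 <-> semLA t d (t :: l1) l2.
Proof.
rewrite semLA_seq; split.
  move=> [l0 [H1 H2]]; move: H1 => /semLA_tens.
  move=> [a [b [c [d' [e1 [e2 [/semLA_one [ea ec] /semLA_idn [ed _]]]]]]]].
  by subst.
move=> H; have [hs _] := semLA_size H; move: hs => /= [hs].
exists (t :: l1); split=> //.
apply/semLA_tens; exists [::], l1, [:: t], l1; do 2 split => //; split.
  by apply/semLA_one.
by apply/semLA_idn.
Qed.

Fixpoint sw1 (n : nat) : circ (1 + n) (n + 1) :=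
  match n return circ (1 + n) (n + 1) with
  | 0 => CId1 k
  | n'.+1 => CSeq (CTens (CSw k) (idn k n')) (CTens (CId1 k) (sw1 n'))
  end.

Lemma semLA_sw1 t n l1 l2 :
  semLA t (sw1 n) l1 l2 <-> exists x l, l1 = x :: l /\ l2 = rcons l x /\ size l = n.
Proof.
elim: n l1 l2 => [|n IH] l1 l2.
  rewrite /= semLA_id1; split.
    by move=> [x [-> ->]]; exists x, [::].
  by move=> [x [l [-> [-> /size0nil ->]]]]; exists x.
apply: iff_trans (semLA_seq t (CTens (CSw k) (idn k n)) (CTens (CId1 k) (sw1 n)) l1 l2) _.
split.
  move=> [l0 [/semLA_tens [a [b [c [d [-> [-> [/semLA_sw [x [y [-> ->]]] /semLA_idn [<- hs]]]]]]]]]].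
  move=> H; have := iffLR (semLA_tens t (CId1 k) (sw1 n) _ _) H.
  move=> [a' [b' [c' [d' [e1 [-> [/semLA_id1 [z [ea ec]]]]]]]]].
  subst a' c'; case: e1 => <- <- /IH [x' [l [e1 [-> hl]]]].
  case: e1 => <- <-; exists x, (y :: b); split => //; split => //.
  by rewrite /= hs.
move=> [x [[|y l] [-> [-> hs]]]] //.
exists [:: y, x & l]; split.
  apply/semLA_tens; exists [:: x; y], l, [:: y; x], l; do 2 split => //; split.
    by apply/semLA_sw; exists x, y.
  by apply/semLA_idn; case: hs.
apply: (iffRL (semLA_tens t (CId1 k) (sw1 n) _ _)).
exists [:: y], (x :: l), [:: y], (rcons l x); do 2 split => //; split.
  by apply/semLA_id1; exists y.
by apply/IH; exists x, l; case: hs.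
Qed.

Lemma SF_idn b n : SFgen b (idn k n).
Proof.
elim: n => [|n IH]; first exact: sf_id0.
exact: (@sf_tens k b 1 1 n n (CId1 k) (idn k n) (sf_id1 _ _) IH).
Qed.

Lemma SF_cast b n m n' m' (e1 : n = n') (e2 : m = m') (c : circ n m) :
  SFgen b c -> SFgen b (castc e1 e2 c).
Proof. by case: n' / e1; case: m' / e2. Qed.

Lemma SF_sw1 b n : SFgen b (sw1 n).
Proof.
elim: n => [|n IH]; first exact: sf_id1.
apply: (@sf_seq k b _ _ _ (CTens (CSw k) (idn k n)) (CTens (CId1 k) (sw1 n))).
  exact: (@sf_tens k b 2 2 n n (CSw k) (idn k n) (sf_sw _ _) (SF_idn b n)).
exact: (@sf_tens k b 1 1 _ _ (CId1 k) (sw1 n) (sf_id1 _ _) IH).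
Qed.

Lemma SF_ASF n m (c : circ n m) : SFgen false c -> SFgen true c.
Proof.
by elim=> *; try by constructor.
Qed.

End S4.


Section S5.
Variable k : fieldType.
Local Notation K := (K k).
Local Notation circ := (circ k).

Definition hat_spec n m (d : circ n m) (dh : circ (1 + n) m) :=
  SFgen false dh /\ forall t l1 l2, semLA 1 dh (t :: l1) l2 <-> semLA t d l1 l2.

Lemma disc_hat n m (c : circ n m) : uses_one c = false -> SFgen false c ->
  hat_spec c (CTens (CGen (GDisc k)) c).
Proof.
move=> h1 h2; split; first exact: (@sf_tens k false _ _ _ _ _ _ (sf_disc k false) h2).
move=> t l1 l2.
apply: iff_trans (semLA_tens 1 (CGen (GDisc k)) c (t :: l1) l2) _; split.
  move=> [a [b [c' [d [e1 [-> [/semLA_disc [[x ea] ec] H]]]]]]].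
  subst a c'; case: e1 => _ eb; subst => /=.
  exact: (iffLR (semLA_noone 1 t _ _ h1) H).
move=> H; exists [:: t], l1, [::], l2; do 2 split => //; split.
  by apply/semLA_disc; split=> //; exists t.
exact: (iffLR (semLA_noone t 1 _ _ h1) H).
Qed.

Lemma copy_front s n M (e : circ (2 + n) M) l1 l2 t :
  semLA s (CSeq (CTens (CGen (GCopy k)) (idn k n)) e) (t :: l1) l2 <->
  semLA s e [:: t, t & l1] l2.
Proof.
apply: iff_trans (semLA_seq _ _ _ _ _) _; split.
  move=> [l0 [/semLA_tens [a [b [c [d [e1 [-> [/semLA_copy [x [ea ec]] /semLA_idn [ed _]]]]]]]] H]].
  by subst a c d; case: e1 => ea eb; subst.
move=> H; have [hs _] := semLA_size H; move: hs => /= [hs].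
exists [:: t, t & l1]; split=> //.
apply/semLA_tens; exists [:: t], l1, [:: t; t], l1; do 2 split => //; split.
  by apply/semLA_copy; exists t.
by apply/semLA_idn.
Qed.

Lemma id1_front s n M (e : circ n M) l1 l2 t :
  semLA s (CTens (CId1 k) e) (t :: l1) l2 <-> exists l2', l2 = t :: l2' /\ semLA s e l1 l2'.
Proof.
apply: iff_trans (semLA_tens _ _ _ _ _) _; split.
  move=> [a [b [c [d [e1 [-> [/semLA_id1 [x [ea ec]] H]]]]]]].
  by subst a c; case: e1 => ea eb; subst; exists d.
move=> [l2' [-> H]]; exists [:: t], l1, [:: t], l2'; do 2 split => //; split => //.
by apply/semLA_id1; exists t.
Qed.

Lemma hat_exists n m (d : circ n m) : SFgen true d -> exists dh, @hat_spec n m d dh.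
Proof.
elim=> {n m d}.
- by eexists; apply: disc_hat => //; constructor.
- by eexists; apply: disc_hat => //; constructor.
- by move=> r; eexists; apply: disc_hat => //; constructor.
- by eexists; apply: disc_hat => //; constructor.
- by eexists; apply: disc_hat => //; constructor.
- by eexists; apply: disc_hat => //; constructor.
- move=> _; exists (CId1 k); split; first by constructor.
  move=> t l1 l2; rewrite semLA_id1 semLA_one; split.
    by move=> [x [[-> ->] ->]].
  by move=> [-> ->]; exists t.
- by eexists; apply: disc_hat => //; constructor.
- by eexists; apply: disc_hat => //; constructor.
- by eexists; apply: disc_hat => //; constructor.
- move=> n l m c1 c2 _ [dh1 [S1 H1]] _ [dh2 [S2 H2]].
  exists (CSeq (CTens (CGen (GCopy k)) (idn k n)) (CSeq (CTens (CId1 k) dh1) dh2)).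
  split.
    apply: (@sf_seq k false _ _ _ (CTens (CGen (GCopy k)) (idn k n)) (CSeq (CTens (CId1 k) dh1) dh2)).
      exact: (@sf_tens k false 1 2 n n _ _ (sf_copy k false) (SF_idn k false n)).
    apply: (@sf_seq k false _ _ _ (CTens (CId1 k) dh1) dh2) => //.
    exact: (@sf_tens k false 1 1 _ _ _ _ (sf_id1 k false) S1).
  move=> t l1 l2; apply: iff_trans (copy_front _ _ _ _ _) _.
  apply: iff_trans (semLA_seq _ _ _ _ _) _.
  rewrite semLA_seq; split.
    move=> [l0 [/id1_front [l0' [-> /H1 HA]] /H2 HB]].
    by exists l0'.
  move=> [l0 [/H1 HA /H2 HB]]; exists (t :: l0); split => //.
  by apply/id1_front; exists l0.
- move=> n1 m1 n2 m2 c1 c2 _ [dh1 [S1 H1]] _ [dh2 [S2 H2]].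
  have e : ((1 + n1) + (1 + n2) = 1 + ((n1 + 1) + n2))%N.
    by rewrite addn1 addSn addnS.
  exists (CSeq (CTens (CGen (GCopy k)) (idn k (n1 + n2)))
    (CSeq (CTens (CId1 k) (CTens (sw1 k n1) (idn k n2))) (castc e erefl (CTens dh1 dh2)))).
  split.
    apply: (@sf_seq k false _ _ _ (CTens (CGen (GCopy k)) (idn k (n1+n2)))
       (CSeq (CTens (CId1 k) (CTens (sw1 k n1) (idn k n2))) (castc e erefl (CTens dh1 dh2)))).
      exact: (@sf_tens k false 1 2 _ _ _ _ (sf_copy k false) (SF_idn k false _)).
    apply: (@sf_seq k false _ _ _ (CTens (CId1 k) (CTens (sw1 k n1) (idn k n2)))
       (castc e erefl (CTens dh1 dh2))).
      exact: (@sf_tens k false 1 1 _ _ _ _ (sf_id1 k false)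
         (@sf_tens k false _ _ _ _ _ _ (SF_sw1 k false n1) (SF_idn k false n2))).
    by apply: SF_cast; exact: (@sf_tens k false _ _ _ _ _ _ S1 S2).
  move=> t l1 l2; apply: iff_trans (copy_front _ _ _ _ _) _.
  apply: iff_trans (semLA_seq _ _ _ _ _) _.
  rewrite semLA_tens; split.
    move=> [l0 [/id1_front [l0' [-> HA]] HB]].
    have := iffLR (semLA_tens 1 (sw1 k n1) (idn k n2) _ _) HA.
    move=> [a [b [c [d' [ea [ec [/semLA_sw1 [x [a' [ea' [ec' sa]]]] /semLA_idn [ed sb]]]]]]]].
    subst a c d' l0'; case: ea => ex el; subst x l1.
    move: HB; rewrite semLA_cast semLA_tens cat_rcons -cat_cons.
    move=> [a2 [b2 [cc2 [dd2 [e1 [-> [HA' HB']]]]]]].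
    have [sa2 _] := semLA_size HA'.
    move: e1 => /cat_eqsize; rewrite /= sa sa2 => /(_ erefl) [ea eb]; subst a2 b2.
    exists a', b, cc2, dd2; do 2 split => //; split; [exact/H1|exact/H2].
  move=> [a [b [c [d' [-> [-> [HA HB]]]]]]].
  have [sa sc] := semLA_size HA; have [sb sd] := semLA_size HB.
  exists (t :: (rcons a t ++ b)); split.
    apply/id1_front; exists (rcons a t ++ b); split => //.
    apply: (iffRL (semLA_tens 1 (sw1 k n1) (idn k n2) _ _)).
    exists (t :: a), b, (rcons a t), b; do 2 split => //; split.
      by apply/semLA_sw1; exists t, a.
    by apply/semLA_idn.
  rewrite semLA_cast semLA_tens; exists (t :: a), (t :: b), c, d'.
  rewrite cat_rcons; do 2 split => //; split; [exact/H1|exact/H2].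
- move=> n m c _ [dh [S H]].
  exists (Tr (n := 1 + n) (m := m) dh); split; first exact: sf_tr.
  move=> t l1 l2; apply: iff_trans (semLA_Tr _ _ _ _) _.
  rewrite semLA_Tr; split.
    by move=> [y [z [/H HA e]]]; exists y, z.
  by move=> [y [z [/H HA e]]]; exists y, z.
Qed.

End S5.


Section S6.
Variable k : fieldType.
Local Notation K := (K k).
Local Notation circ := (circ k).

Definition jlin n m (F : K -> 'rV[K]_n -> 'rV[K]_m -> Prop) :=
  F 0 0 0 /\ forall a t u v t' u' v', F t u v -> F t' u' v' ->
    F (a * t + t') (a *: u + u') (a *: v + v').

Lemma jlin_gen n m (g : gen k n m) (a t t' : K) u v u' v' :
  semA_gen t g u v -> semA_gen t' g u' v' -> semA_gen (a * t + t') g (a *: u + u') (a *: v + v').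
Proof.
case: n m / g u v u' v' => /= [||r||||] u v u' v'; rewrite ?mxE //.
- by move=> [-> ->] [-> ->].
- by move=> -> ->; ring.
- by move=> -> ->; ring.
- by move=> -> ->; ring.
- by move=> -> ->; ring.
- by move=> -> ->.
Qed.

Lemma jlin_gen0' n m (g : gen k n m) u v : u = 0 -> v = 0 -> semA_gen 0 g u v.
Proof. by case: n m / g u v => /= [||r||||] u v eu ev; subst; rewrite ?mxE ?mulr0 ?mul0r ?addr0. Qed.

Lemma jlin_gen0 n m (g : gen k n m) : semA_gen 0 g 0 0.
Proof. exact: jlin_gen0'. Qed.

Lemma lsubmx_lin n1 n2 (a : K) (u u' : 'rV[K]_(n1 + n2)) :
  lsubmx (a *: u + u') = a *: lsubmx u + lsubmx u'.
Proof. by apply/matrixP => i j; rewrite !mxE. Qed.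

Lemma rsubmx_lin n1 n2 (a : K) (u u' : 'rV[K]_(n1 + n2)) :
  rsubmx (a *: u + u') = a *: rsubmx u + rsubmx u'.
Proof. by apply/matrixP => i j; rewrite !mxE. Qed.

Lemma lsubmx0' n1 n2 : lsubmx (0 : 'rV[K]_(n1 + n2)) = 0.
Proof. by apply/matrixP => i j; rewrite !mxE. Qed.

Lemma rsubmx0' n1 n2 : rsubmx (0 : 'rV[K]_(n1 + n2)) = 0.
Proof. by apply/matrixP => i j; rewrite !mxE. Qed.

Lemma jlin_semA n m (c : circ n m) : jlin (fun t => semA t c).
Proof.
elim: c => [n' m' g|n' m' g| | | |n' l m' c1 [z1 IH1] c2 [z2 IH2]
  |n1 m1 n2 m2 c1 [z1 IH1] c2 [z2 IH2]] /=.
- by split; [exact: jlin_gen0 | move=> *; exact: jlin_gen].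
- by split; [exact: jlin_gen0 | move=> *; exact: jlin_gen].
- by [].
- by split=> // a t u v t' u' v' -> ->.
- split; first by rewrite !mxE.
  by move=> a t u v t' u' v' [h1 h2] [h1' h2']; rewrite !mxE h1 h2 h1' h2'.
- split; first by exists 0.
  move=> a t u v t' u' v' [w [h1 h2]] [w' [h1' h2']].
  by exists (a *: w + w'); split; [exact: IH1|exact: IH2].
- split; first by rewrite !lsubmx0' !rsubmx0'.
  move=> a t u v t' u' v' [h1 h2] [h1' h2'].
  by rewrite !lsubmx_lin !rsubmx_lin; split; [exact: IH1|exact: IH2].
Qed.

Lemma lin_ext N M (F G : K -> 'rV[K]_N -> 'rV[K]_M -> Prop) :
  jlin F -> jlin G -> (forall a b, F 1 a b <-> G 1 a b) -> (exists a b, F 1 a b) ->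
  forall t a b, F t a b -> G t a b.
Proof.
move=> [F0 FL] [G0 GL] E [a1 [b1 H1]] t a b H.
have [t0|t0] := eqVneq t 0.
  subst t.
  have := FL 1 0 a b 1 a1 b1 H H1; rewrite mul1r add0r !scale1r => /E HG.
  have := GL (-1) 1 a1 b1 1 (a + a1) (b + b1) (iffLR (E _ _) H1) HG.
  have -> : -1 * 1 + 1 = 0 :> K by rewrite mulN1r addNr.
  by rewrite !scaleN1r addrC -addrA subrr addr0 addrC -addrA subrr addr0.
have := FL t^-1 t a b 0 0 0 H F0; rewrite !addr0 mulVf // => /E HG.
have := GL t 1 _ _ 0 0 0 HG G0; rewrite !addr0 mulr1 !scalerA mulfV // !scale1r.
by [].
Qed.

End S6.


Section S7.
Variable k : fieldType.
Local Notation K := (K k).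
Local Notation circ := (circ k).

Definition causal (f : K) := exists p q : {poly k}, q.[0] != 0 /\ f = kx p / kx q.

Lemma kx_neq0 (q : {poly k}) : q.[0] != 0 -> kx q != 0.
Proof.
move=> h; rewrite /kx tofrac_eq0; apply: contraNneq h => ->.
by rewrite horner0.
Qed.

Lemma causal_kx p : causal (kx p).
Proof.
exists p, 1; rewrite hornerC oner_neq0; split=> //.
by rewrite /kx tofrac1 divr1.
Qed.

Lemma causal0 : causal 0.
Proof. by have := causal_kx 0; rewrite /kx tofrac0. Qed.

Lemma causal1 : causal 1.
Proof. by have := causal_kx 1; rewrite /kx tofrac1. Qed.

Lemma causalD f g : causal f -> causal g -> causal (f + g).
Proof.
move=> [p1 [q1 [h1 ->]]] [p2 [q2 [h2 ->]]].
exists (p1 * q2 + p2 * q1), (q1 * q2); split.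
  by rewrite hornerM mulf_neq0.
by rewrite addf_div ?kx_neq0 // /kx tofracD !tofracM.
Qed.

Lemma causalM f g : causal f -> causal g -> causal (f * g).
Proof.
move=> [p1 [q1 [h1 ->]]] [p2 [q2 [h2 ->]]].
exists (p1 * p2), (q1 * q2); split.
  by rewrite hornerM mulf_neq0.
by rewrite mulf_div /kx !tofracM.
Qed.

Lemma causal_sum n (F : 'I_n -> K) : (forall i, causal (F i)) -> causal (\sum_i F i).
Proof.
move=> h; apply: (big_ind causal causal0 causalD) => i _; exact: h.
Qed.

Lemma causal_mul_mx n p m (A : 'M[K]_(n, p)) (B : 'M[K]_(p, m)) :
  (forall i j, causal (A i j)) -> (forall i j, causal (B i j)) ->
  forall i j, causal ((A *m B) i j).
Proof.
move=> hA hB i j; rewrite mxE; apply: causal_sum => l; exact: causalM.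
Qed.

Lemma causal_h g : causal g ->
  1 - g * xK k != 0 /\ causal (xK k / (1 - g * xK k)).
Proof.
move=> [p [q [hq ->]]].
have hq' : (q - p * 'X).[0] != 0.
  by rewrite hornerD hornerN hornerM hornerX mulr0 subr0.
have e : 1 - kx p / kx q * xK k = kx (q - p * 'X) / kx q.
  rewrite /xK [kx (q - _)]/kx tofracB tofracM -/(kx q) -/(kx p) -/(kx 'X).
  by rewrite mulrBl divff ?kx_neq0 // mulrAC.
have nz : 1 - kx p / kx q * xK k != 0.
  by rewrite e mulf_neq0 ?invr_eq0 ?kx_neq0.
split=> //; rewrite e; exists ('X * q), (q - p * 'X); split=> //.
by rewrite invf_div mulrA /xK /kx tofracM.
Qed.

End S7.


Section S8.
Variable k : fieldType.
Local Notation K := (K k).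
Local Notation circ := (circ k).

Definition cmx n m (M : 'M[K]_(n, m)) := forall i j, causal (M i j).

Definition aff_inv n m (d : circ n m) :=
  exists (M : 'M[K]_(n, m)) (b : 'rV[K]_m), cmx M /\ cmx b /\
    forall u, semA 1 d u (u *m M + b).

Lemma cmx_const n m (x : K) : causal x -> cmx (const_mx x : 'M[K]_(n, m)).
Proof. by move=> h i j; rewrite mxE. Qed.

Lemma cmx0 n m : cmx (0 : 'M[K]_(n, m)).
Proof. by move=> i j; rewrite mxE; exact: causal0. Qed.

Lemma cmxD n m (A B : 'M[K]_(n, m)) : cmx A -> cmx B -> cmx (A + B).
Proof. by move=> hA hB i j; rewrite mxE; apply: causalD. Qed.

Lemma cmxZ n m (x : K) (A : 'M[K]_(n, m)) : causal x -> cmx A -> cmx (x *: A).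
Proof. by move=> hx hA i j; rewrite mxE; apply: causalM. Qed.

Lemma cmxM n p m (A : 'M[K]_(n, p)) (B : 'M[K]_(p, m)) : cmx A -> cmx B -> cmx (A *m B).
Proof. exact: causal_mul_mx. Qed.

Lemma cmx_lsub n m1 m2 (A : 'M[K]_(n, m1 + m2)) : cmx A -> cmx (lsubmx A).
Proof. by move=> h i j; rewrite mxE. Qed.
Lemma cmx_rsub n m1 m2 (A : 'M[K]_(n, m1 + m2)) : cmx A -> cmx (rsubmx A).
Proof. by move=> h i j; rewrite mxE. Qed.
Lemma cmx_usub n1 n2 m (A : 'M[K]_(n1 + n2, m)) : cmx A -> cmx (usubmx A).
Proof. by move=> h i j; rewrite mxE. Qed.
Lemma cmx_dsub n1 n2 m (A : 'M[K]_(n1 + n2, m)) : cmx A -> cmx (dsubmx A).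
Proof. by move=> h i j; rewrite mxE. Qed.

Lemma cmx_row n m1 m2 (A : 'M[K]_(n, m1)) (B : 'M[K]_(n, m2)) :
  cmx A -> cmx B -> cmx (row_mx A B).
Proof.
move=> hA hB i j; case: (splitP j) => j' ej.
  have -> : j = lshift m2 j' by apply: val_inj.
  by rewrite row_mxEl.
have -> : j = rshift m1 j' by apply: val_inj.
by rewrite row_mxEr.
Qed.

Lemma cmx_col n1 n2 m (A : 'M[K]_(n1, m)) (B : 'M[K]_(n2, m)) :
  cmx A -> cmx B -> cmx (col_mx A B).
Proof.
move=> hA hB i j; case: (splitP i) => i' ei.
  have -> : i = lshift n2 i' by apply: val_inj.
  by rewrite col_mxEu.
have -> : i = rshift n1 i' by apply: val_inj.
by rewrite col_mxEd.
Qed.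

Lemma mul1_entry m (u : 'rV[K]_1) (M : 'M[K]_(1, m)) j : (u *m M) ord0 j = u ord0 ord0 * M ord0 j.
Proof. by rewrite mxE big_ord1. Qed.

Lemma mul2_entry m (u : 'rV[K]_2) (M : 'M[K]_(2, m)) j :
  (u *m M) ord0 j = u ord0 o0 * M o0 j + u ord0 o1 * M o1 j.
Proof.
rewrite mxE big_ord_recl big_ord1; congr (_ * _ + _ * _).
- by congr (u _ _); apply: val_inj.
- by congr (M _ _); apply: val_inj.
Qed.

Lemma addE p q (A B : 'M[K]_(p, q)) i j : (A + B) i j = A i j + B i j.
Proof. by rewrite mxE. Qed.
Lemma scaleE p q x (A : 'M[K]_(p, q)) i j : (x *: A) i j = x * A i j.
Proof. by rewrite mxE. Qed.

Lemma lsubmxD n m1 m2 (A B : 'M[K]_(n, m1 + m2)) : lsubmx (A + B) = lsubmx A + lsubmx B.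
Proof. by apply/matrixP => i j; rewrite !mxE. Qed.
Lemma rsubmxD n m1 m2 (A B : 'M[K]_(n, m1 + m2)) : rsubmx (A + B) = rsubmx A + rsubmx B.
Proof. by apply/matrixP => i j; rewrite !mxE. Qed.

Lemma ASF_inv n m (d : circ n m) : SFgen true d -> aff_inv d.
Proof.
elim=> {n m d}.
- exists (const_mx 1), 0; split; first exact/cmx_const/causal1.
  split; first exact: cmx0.
  by move=> u /=; rewrite addr0 !mul1_entry !mxE !mulr1.
- exists 0, 0; split; first exact: cmx0.
  by split; first exact: cmx0.
- move=> r; exists (const_mx (kx r%:P)), 0; split; first exact/cmx_const/causal_kx.
  split; first exact: cmx0.
  by move=> u /=; rewrite addr0 !mul1_entry !mxE mulrC.
- exists (const_mx (xK k)), 0; split; first exact/cmx_const/causal_kx.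
  split; first exact: cmx0.
  by move=> u /=; rewrite addr0 !mul1_entry !mxE.
- exists (const_mx 1), 0; split; first exact/cmx_const/causal1.
  split; first exact: cmx0.
  by move=> u /=; rewrite addr0 !mul2_entry !mxE !mulr1.
- exists 0, 0; split; first exact: cmx0.
  split; first exact: cmx0.
  by move=> u /=; rewrite mulmx0 addr0 mxE.
- move=> _; exists 0, (const_mx 1); split; first exact: cmx0.
  split; first exact/cmx_const/causal1.
  by move=> u /=; rewrite mulmx0 add0r mxE.
- exists 0, 0; split; first exact: cmx0.
  by split; first exact: cmx0.
- exists 1%:M, 0; split.
    by move=> i j; rewrite mxE; case: (i == j); [exact: causal1|exact: causal0].
  split; first exact: cmx0.
  by move=> u /=; rewrite mulmx1 addr0.
- exists (\matrix_(i < 2, j < 2) (i != j)%:R), 0; split.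
    by move=> i j; rewrite mxE; case: (i != j); [exact: causal1|exact: causal0].
  split; first exact: cmx0.
  by move=> u /=; rewrite addr0 !mul2_entry !mxE /= mulr0 mulr1 mulr1 mulr0 addr0 add0r.
- move=> n l m c1 c2 _ [M1 [b1 [hM1 [hb1 H1]]]] _ [M2 [b2 [hM2 [hb2 H2]]]].
  exists (M1 *m M2), (b1 *m M2 + b2); split; first exact: cmxM.
  split; first by apply: cmxD => //; apply: cmxM.
  move=> u /=; exists (u *m M1 + b1); split=> //.
  by rewrite mulmxA addrA -mulmxDl.
- move=> n1 m1 n2 m2 c1 c2 _ [M1 [b1 [hM1 [hb1 H1]]]] _ [M2 [b2 [hM2 [hb2 H2]]]].
  exists (block_mx M1 0 0 M2), (row_mx b1 b2); split.
    by apply: cmx_col; apply: cmx_row => //; exact: cmx0.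
  split; first exact: cmx_row.
  move=> u /=.
  have -> : u *m block_mx M1 0 0 M2 + row_mx b1 b2 =
      row_mx (lsubmx u *m M1 + b1) (rsubmx u *m M2 + b2).
    by rewrite -{1}(hsubmxK u) mul_row_block !mulmx0 addr0 add0r add_row_mx.
  by rewrite row_mxKl row_mxKr.
- move=> n m c _ [M [b [hM [hb H]]]].
  pose Mu := usubmx M; pose Md := dsubmx M.
  pose L := lsubmx Mu; pose R := rsubmx Mu; pose Dl := lsubmx Md.
  pose g := rsubmx Md ord0 ord0.
  have [hg hh] : 1 - g * xK k != 0 /\ causal (xK k / (1 - g * xK k)).
    by apply: causal_h; exact: (cmx_rsub (cmx_dsub hM) ord0 ord0).
  pose h := xK k / (1 - g * xK k).
  exists (L + h *: (R *m Dl)), (lsubmx b + h *: (rsubmx b *m Dl)).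
  have cMu : cmx Mu by apply: cmx_usub.
  have cMd : cmx Md by apply: cmx_dsub.
  split.
    apply: cmxD; first exact: cmx_lsub.
    by apply: cmxZ => //; apply: cmxM; [exact: cmx_rsub|exact: cmx_lsub].
  split.
    apply: cmxD; first exact: cmx_lsub.
    by apply: cmxZ => //; apply: cmxM; [exact: cmx_rsub|exact: cmx_lsub].
  move=> u; pose beta := u *m R + rsubmx b; pose s := h *: beta.
  pose w := row_mx u s *m M + b.
  apply/semLA_row/semLA_Tr; exists (s ord0 ord0), (rsubmx w ord0 ord0); split.
    have -> : rcons (tolist u) (s ord0 ord0) = tolist (row_mx u s).
      by rewrite tolist_row_mx tolist1 cats1.
    have -> : rcons (tolist (u *m (L + h *: (R *m Dl)) + (lsubmx b + h *: (rsubmx b *m Dl))))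
        (rsubmx w ord0 ord0) = tolist w.
      rewrite -(hsubmxK w) tolist_row_mx tolist1 cats1; congr (rcons (tolist _) _).
      rewrite /w -(vsubmxK M) mul_row_col lsubmxD lsubmxD -!mulmx_lsub -/Mu -/Md -/L -/Dl.
      rewrite /s /beta -scalemxAl mulmxDl scalerDr mulmxDr -scalemxAr mulmxA.
      rewrite -!addrA; congr (_ + _); rewrite addrA [lsubmx b + _]addrC addrA.
      by [].
    by rewrite row_mxKr.
    by apply/semLA_row; exact: H.
  rewrite /w -{1}(vsubmxK M) mul_row_col rsubmxD rsubmxD -!mulmx_rsub -/Mu -/Md.
  rewrite -/R addrAC -/beta addE mul1_entry -/g /s !scaleE.
  have hh' : h * (1 - g * xK k) = xK k by rewrite /h mulfVK.
  set bb := beta ord0 ord0.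
  transitivity (bb * (h * (1 - g * xK k)) + h * bb * g * xK k); first by ring.
  by rewrite hh'; ring.
Qed.

Lemma ASF_nonempty n m (d : circ n m) : SFgen true d -> exists u v, sem d u v.
Proof.
move=> /ASF_inv [M [b [_ [_ H]]]]; exists 0, (0 *m M + b).
exact/sem_semA.
Qed.

End S8.


Lemma enum_filter n (A : {pred 'I_n}) : enum A = filter (mem A) (enum 'I_n).
Proof. rewrite enumT. reflexivity. Qed.

Lemma enum_S n (S : {set 'I_n.+1}) :
  enum S = (if ord0 \in S then [:: ord0] else [::]) ++
           map (lift ord0) (enum [set j | lift ord0 j \in S]).
Proof.
rewrite enum_filter [in RHS]enum_filter enum_ordSl /= filter_map.
have -> : [seq i <- enum 'I_n | preim (lift ord0) (mem S) i] =
    [seq i <- enum 'I_n | mem [set j | lift ord0 j \in S] i].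
  by apply: eq_filter => j; rewrite /= inE.
by case: (ord0 \in S).
Qed.

Lemma card_S n (S : {set 'I_n.+1}) :
  #|S| = ((ord0 \in S) + #|[set j | lift ord0 j \in S]|)%N.
Proof. by rewrite !cardE enum_S size_cat size_map; case: (ord0 \in S). Qed.

Lemma setC_S n (S : {set 'I_n.+1}) :
  [set j | lift ord0 j \in ~: S] = ~: [set j | lift ord0 j \in S].
Proof. by apply/setP => j; rewrite !inE. Qed.

Section S9.
Variable k : fieldType.
Local Notation K := (K k).
Local Notation circ := (circ k).

Definition pkl n (P : {set 'I_n}) (l : seq K) : seq K := map (fun i : 'I_n => nth 0 l i) (enum P).

Lemma size_pkl n (P : {set 'I_n}) l : size (pkl P l) = #|P|.
Proof. by rewrite size_map cardE. Qed.

Lemma tolist_sel n (P : {set 'I_n}) (u : 'rV[K]_n) : tolist (sel P u) = pkl P (tolist u).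
Proof.
apply: (@eq_from_nth _ 0); first by rewrite size_tolist size_pkl.
move=> i; rewrite size_tolist => hi.
rewrite nth_tolist mxE (nth_map (enum_val (Ordinal hi))) -?cardE //.
rewrite (nth_tolist u (ltn_ord _)).
have Ee : nth (enum_val (Ordinal hi)) (enum P) i = enum_val (Ordinal hi).
  exact: (esym (enum_val_nth _ (Ordinal hi))).
rewrite Ee.
by congr (u _ _); apply: val_inj.
Qed.

Lemma pkl_cons n (S : {set 'I_n.+1}) x l :
  pkl S (x :: l) = (if ord0 \in S then [:: x] else [::]) ++ pkl [set j | lift ord0 j \in S] l.
Proof.
rewrite /pkl enum_S map_cat -map_comp; case: (ord0 \in S) => //=.
Qed.

Definition rewLA (t : K) n m (c : circ n m) (P : {set 'I_n}) (Q : {set 'I_m}) la lb :=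
  exists lu lv, semLA t c lu lv /\ la = pkl P lu ++ pkl Q lv /\
    lb = pkl (~: P) lu ++ pkl (~: Q) lv.

Lemma rewLA_size t n m (c : circ n m) P Q la lb : rewLA t c P Q la lb ->
  size la = (#|P| + #|Q|)%N /\ size lb = (#|~: P| + #|~: Q|)%N.
Proof. by move=> [lu [lv [_ [-> ->]]]]; rewrite !size_cat !size_pkl. Qed.

Lemma rewLA_ext t t' n m (c : circ n m) (c' : circ n m) P Q la lb :
  (forall lu lv, semLA t c lu lv <-> semLA t' c' lu lv) ->
  rewLA t c P Q la lb <-> rewLA t' c' P Q la lb.
Proof.
move=> E; split=> -[lu [lv [H [e1 e2]]]]; exists lu, lv; split=> //; by apply/E.
Qed.

Lemma rew_rows t n m (c : circ n m) P Q a b :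
  (exists u v, semA t c u v /\ a = row_mx (sel P u) (sel Q v) /\
      b = row_mx (sel (~: P) u) (sel (~: Q) v)) <->
  rewLA t c P Q (tolist a) (tolist b).
Proof.
split.
  move=> [u [v [H [-> ->]]]]; exists (tolist u), (tolist v); split; first by exists u, v.
  by rewrite !tolist_row_mx !tolist_sel.
move=> [lu [lv [[u [v [H [<- <-]]]] [e1 e2]]]]; exists u, v; split=> //.
split; apply: tolist_inj; by rewrite tolist_row_mx !tolist_sel.
Qed.

Lemma rew_list n m (c : circ n m) (P : {set 'I_n}) (Q : {set 'I_m})
    (d : circ (#|P| + #|Q|) (#|~: P| + #|~: Q|)) :
  @rewiring_equiv k n m c P Q d <-> forall la lb, semLA 1 d la lb <-> rewLA 1 c P Q la lb.
Proof.
have E : forall (a : 'rV[K]_(#|P| + #|Q|)) (b : 'rV[K]_(#|~: P| + #|~: Q|)),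
    (exists u v, sem c u v /\ a = row_mx (sel P u) (sel Q v) /\
      b = row_mx (sel (~: P) u) (sel (~: Q) v)) <->
    rewLA 1 c P Q (tolist a) (tolist b).
  move=> a b; apply: iff_trans _ (rew_rows 1 c a b); split.
    by move=> [u [v [H e]]]; exists u, v; split=> //; apply/sem_semA.
  by move=> [u [v [H e]]]; exists u, v; split=> //; apply/sem_semA.
split.
  move=> H.
  have key : forall (a : 'rV[K]_(#|P| + #|Q|)) (b : 'rV[K]_(#|~: P| + #|~: Q|)),
    semLA 1 d (tolist a) (tolist b) <-> rewLA 1 c P Q (tolist a) (tolist b).
    move=> a b.
    apply: (iff_trans (iff_sym (semLA_row 1 d a b))).
    apply: (iff_trans (iff_sym (sem_semA d a b))).
    exact: (iff_trans (H a b) (E a b)).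
  move=> la lb; split=> h.
    have [s1 s2] := semLA_size h.
    have [a ea] := tolist_surj s1; have [b eb] := tolist_surj s2.
    by subst la lb; apply/key.
  have [s1 s2] := rewLA_size h.
  have [a ea] := tolist_surj s1; have [b eb] := tolist_surj s2.
  by subst la lb; apply/key.
move=> H a b.
apply: (iff_trans (sem_semA d a b)).
apply: (iff_trans (semLA_row 1 d a b)).
exact: (iff_trans (H _ _) (iff_sym (E a b))).
Qed.

End S9.


Section S10.
Variable k : fieldType.
Local Notation K := (K k).
Local Notation circ := (circ k).

Lemma sel_lin n (P : {set 'I_n}) (a : K) (u u' : 'rV[K]_n) :
  sel P (a *: u + u') = a *: sel P u + sel P u'.
Proof. by apply/matrixP => i j; rewrite !mxE. Qed.

Lemma sel0 n (P : {set 'I_n}) : sel P (0 : 'rV[K]_n) = 0.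
Proof. by apply/matrixP => i j; rewrite !mxE. Qed.

Lemma jlin_rew n m (e : circ n m) (P : {set 'I_n}) (Q : {set 'I_m}) :
  jlin (fun t (a : 'rV[K]_(#|P| + #|Q|)) (b : 'rV[K]_(#|~: P| + #|~: Q|)) =>
    exists u v, semA t e u v /\ a = row_mx (sel P u) (sel Q v) /\
      b = row_mx (sel (~: P) u) (sel (~: Q) v)).
Proof.
have [Z L] := jlin_semA e; split.
  by exists 0, 0; rewrite !sel0 !row_mx0.
move=> a t x y t' x' y' [u [v [H [-> ->]]]] [u' [v' [H' [-> ->]]]].
exists (a *: u + u'), (a *: v + v'); split; first exact: L.
by rewrite !sel_lin !scale_row_mx !add_row_mx.
Qed.

Lemma plug_chat n m (chat : circ n.+1 m) t lu lv : uses_one chat = false ->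
  semLA t (plug_one chat) lu lv <-> semLA 1 chat (t :: lu) lv.
Proof.
move=> h; apply: (iff_trans (semLA_plug t (N := n) chat lu lv)).
exact: semLA_noone.
Qed.

Lemma rew_shift n m (chat : circ n.+1 m) (P : {set 'I_n.+1}) (Q : {set 'I_m}) t la lb :
  uses_one chat = false -> ord0 \in P ->
  rewLA 1 chat P Q (t :: la) lb <-> rewLA t (plug_one chat) [set j | lift ord0 j \in P] Q la lb.
Proof.
move=> h hP; split.
  move=> [lu [lv [H [e1 e2]]]].
  have [s1 _] := semLA_size H.
  case: lu s1 H e1 e2 => // y lu _ H.
  rewrite !pkl_cons hP inE hP /= setC_S => -[ey ->] ->; subst y.
  by exists lu, lv; split=> //; apply/plug_chat.
move=> [lu [lv [H [-> ->]]]].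
exists (t :: lu), lv; split; first exact/plug_chat.
by rewrite !pkl_cons hP inE hP /= setC_S.
Qed.

End S10.

Theorem theorem6 (k : fieldType) (n m : nat) (c : circ k n m) (chat : circ k n.+1 m) :
  is_Circ chat ->
  circ_equiv c (plug_one chat) ->
  (realisable c <-> is_input_port chat (inl ord0)).
Proof.
move=> hC hE.
have hB : forall lu lv, semLA 1 c lu lv <-> semLA 1 (plug_one chat) lu lv.
  move=> lu lv; split=> -[u [v [H [e1 e2]]]]; exists u, v; split=> //;
    apply/sem_semA; apply/hE; exact/sem_semA.
split.
- move=> [P' [Q [d [ASFd Hd]]]].
  pose P : {set 'I_n.+1} := ord0 |: [set lift ord0 j | j in P'].
  have hP0 : ord0 \in P by rewrite !inE eqxx.
  have hP' : [set j | lift ord0 j \in P] = P'.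
    apply/setP => j; rewrite !inE (mem_imset _ _ (@lift_inj _ ord0)).
    by rewrite eq_sym (negbTE (neq_lift ord0 j)).
  have cP : #|P| = (1 + #|P'|)%N by rewrite card_S hP0 hP'.
  have cPc : #|~: P| = #|~: P'| by rewrite card_S inE hP0 setC_S hP'.
  have [dh [SFdh Hdh]] := hat_exists ASFd.
  have e1 : (1 + (#|P'| + #|Q|) = #|P| + #|Q|)%N by rewrite cP addnA.
  have e2 : (#|~: P'| + #|~: Q| = #|~: P| + #|~: Q|)%N by rewrite cPc.
  exists P, Q; split; first exact: hP0.
  exists (castc e1 e2 dh); split; first exact: SF_cast.
  have MAIN : forall t la lb, semLA t d la lb <-> rewLA t (plug_one chat) P' Q la lb.
    pose F := fun t (a : 'rV[K k]_(#|P'| + #|Q|)) (b : 'rV[K k]_(#|~: P'| + #|~: Q|)) =>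
      semA t d a b.
    pose G := fun t (a : 'rV[K k]_(#|P'| + #|Q|)) (b : 'rV[K k]_(#|~: P'| + #|~: Q|)) =>
      exists u v, semA t (plug_one chat) u v /\ a = row_mx (sel P' u) (sel Q v) /\
        b = row_mx (sel (~: P') u) (sel (~: Q) v).
    have jF : jlin F by exact: jlin_semA.
    have jG : jlin G by exact: jlin_rew.
    have E1 : forall a b, F 1 a b <-> G 1 a b.
      move=> a b; rewrite /F /G.
      apply: (iff_trans (iff_sym (sem_semA d a b))).
      apply: (iff_trans (Hd a b)).
      split=> -[u [v [H e]]]; exists u, v; split=> //.
        by apply/sem_semA/hE.
      by apply/hE/sem_semA.
    have NE : exists a b, F 1 a b.
      have [u [v H]] := ASF_nonempty ASFd.
      by exists u, v; apply/sem_semA.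
    have FG := lin_ext jF jG E1 NE.
    have GF := lin_ext jG jF (fun a b => iff_sym (E1 a b))
      (let: ex_intro a (ex_intro b H) := NE in ex_intro _ a (ex_intro _ b (iffLR (E1 a b) H))).
    move=> t la lb; split=> H.
      have [s1 s2] := semLA_size H.
      have [a ea] := tolist_surj s1; have [b eb] := tolist_surj s2; subst la lb.
      by apply/rew_rows; apply: FG; apply/semLA_row.
    have [s1 s2] := rewLA_size H.
    have [a ea] := tolist_surj s1; have [b eb] := tolist_surj s2; subst la lb.
    by apply/semLA_row; apply: GF; apply/rew_rows.
  apply/rew_list => la lb.
  apply: (iff_trans (semLA_cast _ _ _ _ _ _)).
  case: la => [|t la].
    split=> H.
      by have [/= s1 _] := semLA_size H.
    have [/= s1 _] := rewLA_size H.
    by move: s1; rewrite cP.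
  apply: (iff_trans (Hdh t la lb)).
  apply: (iff_trans (MAIN t la lb)).
  rewrite -{1}hP'.
  exact: (iff_sym (rew_shift Q t la lb hC hP0)).
- move=> [P [Q [hP0 [d [SFd Hd]]]]].
  rewrite /= in hP0.
  pose P' := [set j | lift ord0 j \in P].
  have cP : #|P| = (1 + #|P'|)%N by rewrite card_S hP0.
  have cPc : #|~: P| = #|~: P'| by rewrite card_S inE hP0 setC_S.
  have e1 : (#|P| + #|Q| = 1 + (#|P'| + #|Q|))%N by rewrite cP addnA.
  have e2 : (#|~: P| + #|~: Q| = #|~: P'| + #|~: Q|)%N by rewrite cPc.
  exists P', Q, (CSeq (CTens (CGen (GOne k)) (idn k (#|P'| + #|Q|))) (castc e1 e2 d)).
  split.
    apply: sf_seq.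
      exact: (@sf_tens k true 0 1 _ _ _ _ (sf_one k erefl) (SF_idn k true _)).
    by apply: SF_cast; apply: SF_ASF.
  apply/rew_list => la lb.
  apply: (iff_trans (semLA_plug _ _ _ _)).
  apply: (iff_trans (semLA_cast _ _ _ _ _ _)).
  apply: (iff_trans (iffLR (rew_list chat d) Hd (1 :: la) lb)).
  apply: (iff_trans (rew_shift Q 1 la lb hC hP0)).
  apply: rewLA_ext => lu lv.
  exact: (iff_sym (hB lu lv)).
Qed.
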